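(* For every integer $n \geq 2$, $$P_{11}(n) := \prod_{j=5}^{n} p_j > \left(n \log(n)\right)^n e^{-2n-2},$$ where $p_j$ denotes the $j$-th prime ($p_1 = 2, p_2 = 3, \dots$, so $p_5 = 11$), and the empty product (for $n < 5$) equals $1$. *)

(* Defs.v *)
From mathcomp Require Import all_boot.
From Stdlib Require Import Reals.

(* Smallest prime strictly greater than p: searched in p+1 .. p+p!
   (which always contains a prime, since any prime factor of p!+1 exceeds p). *)
Definition next_prime (p : nat) : nat :=
  p.+1 + find prime (iota p.+1 (p`!)).

(* nth_prime j = p_j, 1-indexed: p_1 = 2, p_2 = 3, p_3 = 5, ... *)
Fixpoint nth_prime (j : nat) : nat :=
  match j with
  | 0 => 1            (* unused junk value; p_1 = next_prime 1 = 2 *)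
  | S k => next_prime (nth_prime k)
  end.

Definition P11 (n : nat) : R :=
  \big[Rmult/1%R]_(5 <= j < n.+1) INR (nth_prime j).

(* Main.v *)
Require Import Defs.
From Stdlib Require Import Reals Lra.
From Coquelicot Require Coquelicot.

Module NumB.
Import Coquelicot.Coquelicot.
Local Open Scope R_scope.

Lemma mono_from0 (h dh : R -> R) v : 0 <= v ->
  (forall c, 0 <= c -> c <= v -> derivable_pt_lim h c (dh c)) ->
  (forall c, 0 <= c -> c <= v -> 0 <= dh c) -> h 0 <= h v.
Proof.
intros H0 D P. destruct (Req_dec v 0) as [E|E]. { subst; lra. }
destruct (MVT_cor3 h dh 0 v) as [c [Hc1 [Hc2 Hc3]]]. { lra. } { intros; apply D; lra. }
rewrite Hc3. assert (0 <= dh c) by (apply P; lra). nra.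
Qed.

Lemma atanh_lb v : 0 <= v < 1 -> 2*(v + v^3/3 + v^5/5) <= ln (1+v) - ln (1-v).
Proof.
intros [H0 H1].
pose (h := fun x => ln (1+x) - ln (1-x) - 2*(x + x^3/3 + x^5/5)).
assert (M := mono_from0 h (fun c => 2*c^6/(1-c^2)) v H0).
assert (h0 : h 0 = 0).
{ unfold h; cbv beta. rewrite Rplus_0_r, Rminus_0_r, ln_1. simpl; lra. }
cut (0 <= h v). { unfold h. lra. }
rewrite <- h0. apply M.
- intros c Hc1 Hc2. apply is_derive_Reals. unfold h. auto_derive.
  + lra.
  + field. repeat split; intro; nra.
- intros c Hc1 Hc2. apply Rmult_le_pos.
  { assert (0 <= c^6) by (apply pow_le; lra). lra. }
  apply Rlt_le, Rinv_0_lt_compat. nra.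
Qed.

Lemma atanh_ub v : 0 <= v <= 1/2 ->
  ln (1+v) - ln (1-v) <= 2*(v + v^3/3 + v^5/5 + 4*v^7/21).
Proof.
intros [H0 H1].
pose (h := fun x => 2*(x + x^3/3 + x^5/5 + 4*x^7/21) - (ln (1+x) - ln (1-x))).
assert (M := mono_from0 h (fun c => 2*c^6*(4/3 - 1/(1-c^2))) v H0).
assert (h0 : h 0 = 0).
{ unfold h; cbv beta. rewrite Rplus_0_r, Rminus_0_r, ln_1. simpl; lra. }
cut (0 <= h v). { unfold h. lra. }
rewrite <- h0. apply M.
- intros c Hc1 Hc2. apply is_derive_Reals. unfold h. auto_derive.
  + lra.
  + field. repeat split; intro; nra.
- intros c Hc1 Hc2. apply Rmult_le_pos.
  { assert (0 <= c^6) by (apply pow_le; lra). lra. }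
  assert (1/(1-c^2) <= 4/3).
  { apply Rmult_le_reg_r with (1 - c^2). nra. field_simplify; nra. }
  lra.
Qed.

Lemma ln_lb r : 1 <= r ->
  2*((r-1)/(r+1) + ((r-1)/(r+1))^3/3 + ((r-1)/(r+1))^5/5) <= ln r.
Proof.
intros Hr. set (v := (r-1)/(r+1)).
assert (Hv : 0 <= v < 1).
{ unfold v; split. apply Rmult_le_pos; [lra| apply Rlt_le, Rinv_0_lt_compat; lra].
  apply Rmult_lt_reg_r with (r+1); [lra|]. field_simplify; lra. }
assert (E : r = (1+v)/(1-v)). { unfold v; field. split; lra. }
replace (ln r) with (ln (1+v) - ln (1-v)).
- apply atanh_lb; auto.
- rewrite E at 1. unfold Rdiv. rewrite ln_mult, ln_Rinv; try lra.
  apply Rinv_0_lt_compat; lra.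
Qed.

Lemma ln_ub r : 1 <= r <= 3 ->
  ln r <= 2*((r-1)/(r+1) + ((r-1)/(r+1))^3/3 + ((r-1)/(r+1))^5/5 + 4*((r-1)/(r+1))^7/21).
Proof.
intros Hr. set (v := (r-1)/(r+1)).
assert (Hv : 0 <= v <= 1/2).
{ unfold v; split. apply Rmult_le_pos; [lra| apply Rlt_le, Rinv_0_lt_compat; lra].
  apply Rmult_le_reg_r with (r+1); [lra|]. field_simplify; lra. }
assert (E : r = (1+v)/(1-v)). { unfold v; field. split; lra. }
replace (ln r) with (ln (1+v) - ln (1-v)).
- apply atanh_ub; auto.
- rewrite E at 1. unfold Rdiv. rewrite ln_mult, ln_Rinv; try lra.
  apply Rinv_0_lt_compat; lra.
Qed.

Lemma ln2_b : 0.6930 <= ln 2 <= 0.6932.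
Proof. split; [generalize (ln_lb 2) | generalize (ln_ub 2)]; intro H; (assert (H' := H ltac:(lra))); lra. Qed.
Lemma ln3_b : 1.0958 <= ln 3 <= 1.0989.
Proof. split; [generalize (ln_lb 3) | generalize (ln_ub 3)]; intro H; (assert (H' := H ltac:(lra))); lra. Qed.

End NumB.
Import NumB.

Module NumC.
Local Open Scope R_scope.

Lemma ln_le' x y : 0 < x -> x <= y -> ln x <= ln y.
Proof. intros H1 H2. destruct (Rle_lt_or_eq_dec _ _ H2) as [H|H].
- apply Rlt_le, ln_increasing; auto.
- subst; lra. Qed.

Lemma ln_pos' x : 1 < x -> 0 < ln x.
Proof. intros H. rewrite <- ln_1. apply ln_increasing; lra. Qed.

Lemma ln_le_sub1 y : 0 < y -> ln y <= y - 1.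
Proof.
intros H. assert (E := exp_ineq1_le (y-1)).
apply Rle_trans with (ln (exp (y-1))). apply ln_le'; lra. rewrite ln_exp; lra.
Qed.

Lemma ln_diff a b : 0 < a -> 0 < b -> ln a <= ln b + (a - b)/b.
Proof.
intros Ha Hb.
assert (E : ln a = ln b + ln (a/b)).
{ unfold Rdiv. rewrite ln_mult, ln_Rinv; try lra. apply Rinv_0_lt_compat; lra. }
rewrite E. assert (H := ln_le_sub1 (a/b) ltac:(unfold Rdiv; apply Rmult_lt_0_compat; [lra|apply Rinv_0_lt_compat; lra])).
replace ((a-b)/b) with (a/b - 1) by (field; lra). lra.
Qed.

Lemma ln_mul_lb a b la lb : 0 < a -> 0 < b -> la <= ln a -> lb <= ln b -> la + lb <= ln (a*b).
Proof. intros. rewrite ln_mult; lra. Qed.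
Lemma ln_mul_ub a b la lb : 0 < a -> 0 < b -> ln a <= la -> ln b <= lb -> ln (a*b) <= la + lb.
Proof. intros. rewrite ln_mult; lra. Qed.

Ltac lnlb r := let H := fresh in assert (H := ln_lb r ltac:(lra)); lra.
Ltac lnub r := let H := fresh in assert (H := ln_ub r ltac:(lra)); lra.

Lemma ln12_lb : 2.48 <= ln 12.
Proof. replace 12 with (2*(2*3)) by lra. destruct ln2_b, ln3_b.
rewrite !ln_mult; try lra. Qed.

Lemma ln12_ub : ln 12 <= 2.4853.
Proof. replace 12 with (2*(2*3)) by lra. destruct ln2_b, ln3_b.
rewrite !ln_mult; try lra. Qed.

Lemma ln14_lb : 2.63 <= ln 14.
Proof. replace 14 with (12*(7/6)) by lra. assert (H := ln12_lb).
assert (HH := ln_lb (7/6) ltac:(lra)). rewrite ln_mult; try lra. Qed.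

Lemma ln17_lb : 2.83 <= ln 17.
Proof. replace 17 with (2*(2*(2*(2*(17/16))))) by lra. destruct ln2_b.
assert (HH := ln_lb (17/16) ltac:(lra)). rewrite !ln_mult; try lra. Qed.

Lemma ln26_lb : 3.25 <= ln 26.
Proof. replace 26 with (2*(2*(2*(3*(13/12))))) by lra. destruct ln2_b, ln3_b.
assert (HH := ln_lb (13/12) ltac:(lra)). rewrite !ln_mult; try lra. Qed.

Lemma ln192_lb : 5.25 <= ln 192.
Proof. replace 192 with (2*(2*(2*(2*(2*(2*3)))))) by lra. destruct ln2_b, ln3_b.
rewrite !ln_mult; try lra. Qed.

Lemma lnL_248 : 0.90 <= ln 2.48.
Proof. replace 2.48 with (2*1.24) by lra. destruct ln2_b.
assert (HH := ln_lb 1.24 ltac:(lra)). rewrite ln_mult; try lra. Qed.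
Lemma lnL_263 : 0.96 <= ln 2.63.
Proof. replace 2.63 with (2*1.315) by lra. destruct ln2_b.
assert (HH := ln_lb 1.315 ltac:(lra)). rewrite ln_mult; try lra. Qed.
Lemma lnL_283 : 1.04 <= ln 2.83.
Proof. replace 2.83 with (2*1.415) by lra. destruct ln2_b.
assert (HH := ln_lb 1.415 ltac:(lra)). rewrite ln_mult; try lra. Qed.
Lemma lnL_325 : 1.17 <= ln 3.25.
Proof. replace 3.25 with (3*(13/12)) by lra. destruct ln3_b.
assert (HH := ln_lb (13/12) ltac:(lra)). rewrite ln_mult; try lra. Qed.
Lemma lnL_525 : 1.65 <= ln 5.25.
Proof. replace 5.25 with (3*1.75) by lra. destruct ln3_b.
assert (HH := ln_lb 1.75 ltac:(lra)). rewrite ln_mult; try lra. Qed.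

Lemma lnln4_ub : ln (ln 4) <= 0.33.
Proof.
assert (H : ln 4 <= 1.3864).
{ replace 4 with (2*2) by lra. destruct ln2_b. rewrite !ln_mult; lra. }
assert (H0 : 1 < ln 4). { replace 4 with (2*2) by lra. destruct ln2_b. rewrite ln_mult; lra. }
apply Rle_trans with (ln 1.3864). apply ln_le'; lra. lnub 1.3864.
Qed.

End NumC.
Import NumC.

Module NumD.
Local Open Scope R_scope.

Lemma range_gen (L M t l4 L1 M1 u k0 al be k : R) :
  0 < u -> L1 <= L -> M1 <= M -> 0 <= t -> t <= u -> k0 <= 11*t -> l4 <= 0.33 ->
  al = 2 - 0.33 - u -> be = 1 + u -> k = M1 - 2 + k0 ->
  1 <= al -> 0 <= al*L1 - be -> 0 < L1 + k ->
  0 <= (al-1)*L1^2 + (al*k-be)*L1 - be*k -> 0 <= 2*(al-1)*L1 + al*k - be ->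
  L*L <= (L + M - 2 + 11*t) * ((2 - l4)*L - 1 - t*L - t).
Proof.
intros Hu HL HM Ht0 Htu Hk0 Hl4 Eal Ebe Ek H1 H2 H3 H4 H5.
assert (HL0 : 0 <= L1) by nra.
set (A := (2 - l4)*L - 1 - t*L - t).
set (K := L + M - 2 + 11*t).
assert (HA : al*L - be <= A).
{ unfold A. subst al be. assert (0 <= (0.33 - l4)*L) by nra. assert (0 <= (u-t)*L) by nra. nra. }
assert (HA0 : 0 <= al*L - be) by nra.
assert (HK : L + k <= K) by (unfold K; lra).
assert (HK0 : 0 < L + k) by lra.
assert (Hq : 0 <= (L+k)*(al*L-be) - L*L).
{ replace ((L+k)*(al*L-be) - L*L) with
   (((al-1)*L1^2 + (al*k-be)*L1 - be*k) + (L-L1)*(2*(al-1)*L1 + al*k - be) + (al-1)*((L-L1)*(L-L1))) by ring.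
  assert (0 <= (L-L1)*(2*(al-1)*L1 + al*k - be)) by (apply Rmult_le_pos; lra).
  assert (0 <= (al-1)*((L-L1)*(L-L1))) by (apply Rmult_le_pos; nra).
  lra. }
assert ((L+k)*(al*L-be) <= K*A).
{ apply Rle_trans with (K*(al*L-be)). apply Rmult_le_compat_r; lra. apply Rmult_le_compat_l; lra. }
lra.
Qed.

Definition F (x : R) := x * (ln x + ln (ln x)) - 2*x + 11.

Lemma ln_mono_lb x x1 L1 : 0 < x1 -> x1 <= x -> L1 <= ln x1 -> L1 <= ln x.
Proof. intros. apply Rle_trans with (ln x1); auto. apply ln_le'; auto. Qed.

Lemma main_ineq x : 12 <= x ->
  ln x * ln x <= (ln x + ln (ln x) - 2 + 11*/x) * ((2 - ln (ln 4))*ln x - 1 - /x*ln x - /x).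
Proof.
intros Hx.
assert (Hl4 := lnln4_ub).
assert (Ht0 : 0 <= /x) by (apply Rlt_le, Rinv_0_lt_compat; lra).
assert (L12 : 2.48 <= ln x) by (apply (ln_mono_lb x 12); try lra; apply ln12_lb).
destruct (Rle_lt_dec x 14) as [h14|h14].
{ apply (range_gen _ _ _ _ 2.48 0.90 (/12) (11/14) (2 - 0.33 - /12) (1 + /12) (0.90 - 2 + 11/14)); try lra.
  - apply (ln_mono_lb _ 2.48); try lra. apply lnL_248.
  - apply Rinv_le_contravar; lra.
  - assert (/14 <= /x) by (apply Rinv_le_contravar; lra). lra. }
destruct (Rle_lt_dec x 17) as [h17|h17].
{ assert (L1 : 2.63 <= ln x) by (apply (ln_mono_lb x 14); try lra; apply ln14_lb).
  apply (range_gen _ _ _ _ 2.63 0.96 (/14) (11/17) (2 - 0.33 - /14) (1 + /14) (0.96 - 2 + 11/17)); try lra.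
  - apply (ln_mono_lb _ 2.63); try lra. apply lnL_263.
  - apply Rinv_le_contravar; lra.
  - assert (/17 <= /x) by (apply Rinv_le_contravar; lra). lra. }
destruct (Rle_lt_dec x 26) as [h26|h26].
{ assert (L1 : 2.83 <= ln x) by (apply (ln_mono_lb x 17); try lra; apply ln17_lb).
  apply (range_gen _ _ _ _ 2.83 1.04 (/17) (11/26) (2 - 0.33 - /17) (1 + /17) (1.04 - 2 + 11/26)); try lra.
  - apply (ln_mono_lb _ 2.83); try lra. apply lnL_283.
  - apply Rinv_le_contravar; lra.
  - assert (/26 <= /x) by (apply Rinv_le_contravar; lra). lra. }
destruct (Rle_lt_dec x 192) as [h192|h192].
{ assert (L1 : 3.25 <= ln x) by (apply (ln_mono_lb x 26); try lra; apply ln26_lb).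
  apply (range_gen _ _ _ _ 3.25 1.17 (/26) (11/192) (2 - 0.33 - /26) (1 + /26) (1.17 - 2 + 11/192)); try lra.
  - apply (ln_mono_lb _ 3.25); try lra. apply lnL_325.
  - apply Rinv_le_contravar; lra.
  - assert (/192 <= /x) by (apply Rinv_le_contravar; lra). lra. }
{ assert (L1 : 5.25 <= ln x) by (apply (ln_mono_lb x 192); try lra; apply ln192_lb).
  apply (range_gen _ _ _ _ 5.25 1.65 (/192) 0 (2 - 0.33 - /192) (1 + /192) (1.65 - 2 + 0)); try lra.
  - apply (ln_mono_lb _ 5.25); try lra. apply lnL_525.
  - apply Rinv_le_contravar; lra. }
Qed.

Lemma KL x : 12 <= x -> 0 < F x /\ F (x+1) <= F x + ln (F x) - ln (ln 4).
Proof.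
intros Hx.
assert (MI := main_ineq x Hx).
set (L := ln x) in *. set (M := ln L) in *. set (t := /x) in *. set (l4 := ln (ln 4)) in *.
assert (Hx0 : 0 < x) by lra.
assert (Ht : x * t = 1) by (unfold t; field; lra).
assert (Ht0 : 0 < t) by (unfold t; apply Rinv_0_lt_compat; lra).
assert (HL : 2.48 <= L) by (apply (ln_mono_lb x 12); try lra; apply ln12_lb).
assert (HM : 0.90 <= M) by (apply (ln_mono_lb L 2.48); try lra; apply lnL_248).
set (K := L + M - 2 + 11*t) in *.
assert (HK : 0 < K) by (unfold K; lra).
assert (HF : F x = x * K).
{ unfold F, K. fold L M. replace (x*(L + M - 2 + 11*t)) with (x*(L+M) - 2*x + 11*(x*t)) by ring. rewrite Ht. ring. }
assert (HFpos : 0 < F x) by (rewrite HF; apply Rmult_lt_0_compat; lra).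
split; auto.
assert (H1 : ln (x+1) <= L + t).
{ assert (H := ln_diff (x+1) x ltac:(lra) Hx0). replace ((x+1-x)/x) with t in H by (unfold t; field; lra). exact H. }
assert (H1p : 0 < ln (x+1)) by (apply ln_pos'; lra).
assert (H2 : ln (ln (x+1)) <= M + t/L).
{ assert (H := ln_diff (ln (x+1)) L H1p ltac:(lra)). change (ln L) with M in H.
  assert ((ln (x+1) - L)/L <= t/L).
  { unfold Rdiv. apply Rmult_le_compat_r. apply Rlt_le, Rinv_0_lt_compat; lra. lra. }
  lra. }
assert (H3 : M + 1 - L/K <= ln K).
{ assert (H := ln_diff L K ltac:(lra) HK). change (ln L) with M in H. replace ((L-K)/K) with (L/K - 1) in H by (field; lra). lra. }
assert (H4 : ln (F x) = L + ln K) by (rewrite HF, ln_mult; auto; lra).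
assert (H5 : L/K <= 2 - l4 - /L - t - t/L).
{ replace (2 - l4 - /L - t - t/L) with (((2 - l4)*L - 1 - t*L - t)/L) by (field; lra).
  apply Rmult_le_reg_l with (K*L). apply Rmult_lt_0_compat; lra.
  replace (K*L*(L/K)) with (L*L) by (field; lra).
  replace (K*L*(((2 - l4)*L - 1 - t*L - t)/L)) with (K*((2 - l4)*L - 1 - t*L - t)) by (field; lra).
  exact MI. }
assert (H6 : F (x+1) <= (x+1)*(L + t + M + t/L) - 2*(x+1) + 11).
{ unfold F. assert (ln (x+1) + ln (ln (x+1)) <= L + t + M + t/L) by lra.
  assert ((x+1)*(ln (x+1) + ln (ln (x+1))) <= (x+1)*(L + t + M + t/L)) by (apply Rmult_le_compat_l; lra).
  lra. }
assert (E7 : (x+1)*(L + t + M + t/L) = x*(L+M) + (x*t) + (x*t)/L + L + t + M + t/L) by (field; lra).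
rewrite Ht in E7.
assert (E8 : x*K = x*(L+M) - 2*x + 11*(x*t)) by (unfold K; ring).
rewrite Ht in E8.
rewrite H4, HF. lra.
Qed.

End NumD.
Import NumD.

From mathcomp Require Import all_boot zify.


Definition fpr (p : nat) : nat := if prime p then p else 1.
Definition prim (n : nat) : nat := \prod_(0 <= p < n.+1) fpr p.

Lemma fpr_gt0 p : 0 < fpr p.
Proof. by rewrite /fpr; case: ifP => // /prime_gt0. Qed.

Lemma prod_fpr_gt0 a b : 0 < \prod_(a <= p < b) fpr p.
Proof. by rewrite prodn_gt0 // => i; rewrite fpr_gt0. Qed.

Lemma prime_dvd_fact_le p n : prime p -> p %| n`! -> p <= n.
Proof.
move=> pp; elim: n => [|n IH]; first by rewrite /= Euclid_dvd1.
rewrite factS Euclid_dvdM // => /orP [h|h].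
  by apply: dvdn_leq.
by apply: leq_trans (IH h) _.
Qed.

Lemma coprime_prod_lt q a k : prime q -> k <= q ->
  coprime q (\prod_(a <= p < k) fpr p).
Proof.
move=> pq; elim: k => [|k IH] hk; first by rewrite big_geq // coprimen1.
case: (leqP a k) => hak; last by rewrite big_geq // coprimen1.
rewrite big_nat_recr //= coprimeMr IH ?(ltnW hk) //=.
rewrite /fpr; case: ifP => pk; last exact: coprimen1.
by rewrite prime_coprime // dvdn_prime2 //; apply/eqP => e; rewrite e ltnn in hk.
Qed.

Lemma binom_le m : 'C(m.*2.+1, m) <= 4 ^ m.
Proof.
have h2 : 2 * 'C(m.*2.+1, m) <= 2 ^ m.*2.+1.
  have := expnDn 1 1 m.*2.+1; rewrite addn1 => ->.
  rewrite -(big_mkord xpredT (fun i => 'C(m.*2.+1, i) * (1 ^ (m.*2.+1 - i) * 1 ^ i))).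
  rewrite (big_cat_nat _ (n:=m)) //=; last by lia.
  rewrite (big_cat_nat _ (m:=m) (n:=m.+2)) //=; try lia.
  rewrite (@big_ltn _ _ _ m m.+2) // (@big_ltn _ _ _ m.+1 m.+2) // (@big_geq _ _ _ m.+2 m.+2) // !exp1n !muln1 addn0.
  have -> : 'C(m.*2.+1, m.+1) = 'C(m.*2.+1, m).
    by rewrite -bin_sub; [congr 'C(_, _); lia | lia].
  rewrite mul2n -addnn; apply: leq_trans (leq_addl _ _); exact: leq_addr.
rewrite expnS leq_pmul2l // in h2.
have -> : 4 ^ m = 2 ^ m.*2 by rewrite -mul2n expnM.
exact: h2.
Qed.

Lemma mid_dvd m : \prod_(m.+2 <= p < m.*2.+2) fpr p %| 'C(m.*2.+1, m).
Proof.
have key : forall d, m.+1 + d <= m.*2.+1 ->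
    \prod_(m.+2 <= p < m.+2 + d) fpr p %| 'C(m.*2.+1, m).
  elim=> [|d IH] hd; first by rewrite addn0 big_geq.
  rewrite addnS big_nat_recr /=; last by lia.
  rewrite /fpr; case: ifP => pq; last by rewrite muln1; apply: IH; lia.
  rewrite Gauss_dvd; last first.
    by rewrite coprime_sym coprime_prod_lt.
  rewrite IH /=; last by lia.
  have hb : 'C(m.*2.+1, m) * (m`! * (m.*2.+1 - m)`!) = (m.*2.+1)`! by apply: bin_fact; lia.
  have hq : m.+2 + d %| (m.*2.+1)`! by apply: dvdn_fact; lia.
  rewrite -hb in hq.
  rewrite Gauss_dvdl // in hq.
  rewrite prime_coprime // Euclid_dvdM // negb_or.
  apply/andP; split; apply/negP => /(prime_dvd_fact_le _ _ pq); lia.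
have -> : m.*2.+2 = m.+2 + m by lia.
apply: key; lia.
Qed.

Lemma prim_le n : prim n <= 4 ^ n.
Proof.
elim/ltn_ind: n => n IH.
case: n IH => [|[|[|n]]] IH; try by rewrite /prim unlock.
case: (boolP (odd n.+3)) => hodd.
-
  set m := n.+3./2.
  have hm : n.+3 = m.*2.+1 by rewrite /m -{1}(odd_double_half n.+3) hodd add1n.
  rewrite /prim hm (big_cat_nat _ (n:=m.+2)) //=; try lia.
  have h1 : prim m.+1 <= 4 ^ m.+1 by apply: IH; lia.
  have h2 : \prod_(m.+2 <= p < m.*2.+2) fpr p <= 'C(m.*2.+1, m) by apply: dvdn_leq (mid_dvd m); rewrite bin_gt0; lia.
  have h3 := binom_le m.
  rewrite /prim in h1.
  have -> : 4 ^ m.*2.+1 = 4 ^ m.+1 * 4 ^ m by rewrite -expnD; congr (_ ^ _); lia.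
  apply: leq_mul => //; exact: leq_trans h2 h3.
- rewrite /prim big_nat_recr //= {2}/fpr.
  have -> : prime n.+3 = false.
    apply/negP => pr; have := even_prime pr; case=> [|h]; [lia| by rewrite h in hodd].
  rewrite muln1 expnS.
  have := IH n.+2 (leqnn _); rewrite /prim => h; lia.
Qed.


Lemma next_prime_gt p : p < next_prime p.
Proof. by rewrite /next_prime; apply: leq_addr. Qed.

Lemma next_prime_prime p : 0 < p -> prime (next_prime p).
Proof.
move=> p0.
set q := pdiv (p`!.+1).
have q1 : prime q by apply: pdiv_prime; rewrite ltnS fact_gt0.
have qle : q <= p`!.+1 by apply: pdiv_leq.
have qgt : p < q.
  rewrite ltnNge; apply/negP => hq.
  have h1 : q %| p`! by apply: dvdn_fact; rewrite prime_gt0 // hq.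
  have h2 : q %| p`!.+1 by apply: pdiv_dvd.
  by have := h2; rewrite -addn1 (dvdn_addr _ h1) Euclid_dvd1.
have hin : q \in iota p.+1 p`! by rewrite mem_iota; lia.
have hh : has prime (iota p.+1 p`!) by apply/hasP; exists q.
have := nth_find 0 hh.
rewrite nth_iota; last by move: hh; rewrite has_find size_iota.
done.
Qed.

Lemma nth_prime_ge1 j : 0 < nth_prime j.
Proof. by case: j => //= j; apply: leq_ltn_trans (next_prime_gt _). Qed.

Lemma nth_prime_prime j : 0 < j -> prime (nth_prime j).
Proof. by case: j => //= j _; apply: next_prime_prime; apply: nth_prime_ge1. Qed.

Lemma nth_prime_lt j : nth_prime j < nth_prime j.+1.
Proof. exact: next_prime_gt. Qed.

Lemma next_prime_small p k : k <= p`! -> has prime (iota p.+1 k) ->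
  next_prime p = p.+1 + find prime (iota p.+1 k).
Proof.
move=> hk hh; rewrite /next_prime.
by rewrite -(subnKC hk) iotaD find_cat hh.
Qed.

Lemma prod_nth_dvd j : \prod_(1 <= i < j.+1) nth_prime i %| prim (nth_prime j).
Proof.
elim: j => [|j IH]; first by rewrite big_geq.
have h := nth_prime_lt j.
rewrite big_nat_recr // /prim.
rewrite (@big_cat_nat _ _ _ (nth_prime j).+1 0 (nth_prime j.+1).+1) //.
rewrite (@big_nat_recr _ _ _ (nth_prime j.+1) (nth_prime j).+1) //.
have -> : fpr (nth_prime j.+1) = nth_prime j.+1 by rewrite /fpr nth_prime_prime.
apply: dvdn_mul; first exact: IH.
exact: dvdn_mull.
by apply: ltnW.
Qed.

Lemma prod_nth_le j : \prod_(1 <= i < j.+1) nth_prime i <= 4 ^ nth_prime j.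
Proof.
apply: leq_trans (prim_le _).
apply: dvdn_leq (prod_nth_dvd j).
by rewrite /prim prodn_gt0 // => i; rewrite fpr_gt0.
Qed.

Lemma np1 : nth_prime 1 = 2. Proof. by vm_compute. Qed.
Lemma np2 : nth_prime 2 = 3. Proof. by rewrite /= -/(nth_prime 1) np1; vm_compute. Qed.

Lemma np_step j p k : nth_prime j = p -> k <= p -> has prime (iota p.+1 k) ->
  nth_prime j.+1 = p.+1 + find prime (iota p.+1 k).
Proof.
move=> hj hk hh; rewrite /= hj; apply: next_prime_small hh.
exact: leq_trans hk (fact_geq _).
Qed.

Lemma np3 : nth_prime 3 = 5. Proof. by rewrite (@np_step 2 3 2 np2). Qed.
Lemma np4 : nth_prime 4 = 7. Proof. by rewrite (@np_step 3 5 2 np3). Qed.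
Lemma np5 : nth_prime 5 = 11. Proof. by rewrite (@np_step 4 7 4 np4). Qed.
Lemma np6 : nth_prime 6 = 13. Proof. by rewrite (@np_step 5 11 2 np5). Qed.
Lemma np7 : nth_prime 7 = 17. Proof. by rewrite (@np_step 6 13 4 np6). Qed.
Lemma np8 : nth_prime 8 = 19. Proof. by rewrite (@np_step 7 17 2 np7). Qed.
Lemma np9 : nth_prime 9 = 23. Proof. by rewrite (@np_step 8 19 4 np8). Qed.
Lemma np10 : nth_prime 10 = 29. Proof. by rewrite (@np_step 9 23 6 np9). Qed.
Lemma np11 : nth_prime 11 = 31. Proof. by rewrite (@np_step 10 29 2 np10). Qed.
Lemma np12 : nth_prime 12 = 37. Proof. by rewrite (@np_step 11 31 6 np11). Qed.


Open Scope R_scope.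

Definition Qn (n : nat) : nat := (\prod_(1 <= i < n.+1) nth_prime i)%N.
Definition Rn (n : nat) : nat := (\prod_(5 <= i < n.+1) nth_prime i)%N.

Lemma muln_INR (a b : nat) : INR (a * b)%N = INR a * INR b.
Proof. exact: mult_INR. Qed.

Lemma expn_INR (a k : nat) : INR (a ^ k)%N = INR a ^ k.
Proof. elim: k => [|k IH] //=. by rewrite expnS muln_INR IH. Qed.

Lemma P11_INR n : P11 n = INR (Rn n).
Proof.
rewrite /P11 /Rn. symmetry. apply: (big_morph INR muln_INR). done.
Qed.

Lemma Qn_split n : (4 <= n)%N -> Qn n = (210 * Rn n)%N.
Proof.
move=> hn; rewrite /Qn /Rn (@big_cat_nat _ _ _ 5) //.
rewrite (@big_ltn _ _ _ 1 5); last by []. rewrite (@big_ltn _ _ _ 2 5); last by []. rewrite (@big_ltn _ _ _ 3 5); last by []. rewrite (@big_ltn _ _ _ 4 5); last by []. rewrite (@big_geq _ _ _ 5 5); last by []. by rewrite np1 np2 np3 np4.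
Qed.

Lemma Qn_rec n : Qn n.+1 = (Qn n * nth_prime n.+1)%N.
Proof. by rewrite /Qn big_nat_recr. Qed.

Lemma Qn_gt0 n : (0 < Qn n)%N.
Proof. rewrite /Qn prodn_gt0 // => i; exact: nth_prime_ge1. Qed.

Definition Sr (n : nat) : R := ln (INR (Qn n)).

Lemma INR_pos_nat k : (0 < k)%N -> 0 < INR k.
Proof. move=> h; apply: lt_0_INR; apply/ltP. done. Qed.

Lemma Sr_rec n : Sr n.+1 = Sr n + ln (INR (nth_prime n.+1)).
Proof.
rewrite /Sr Qn_rec muln_INR ln_mult //; apply: INR_pos_nat.
  exact: Qn_gt0.
exact: nth_prime_ge1.
Qed.

Lemma Sr_le n : Sr n <= INR (nth_prime n) * ln 4.
Proof.
rewrite /Sr -ln_pow; last lra.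
apply: ln_le'; first by apply: INR_pos_nat; exact: Qn_gt0.
have h := prod_nth_le n.
have -> : 4 = INR 4 by simpl; lra.
rewrite -expn_INR. apply: le_INR. apply/leP. exact: h.
Qed.

Lemma ln_nat_ge0 k : (0 < k)%N -> 0 <= ln (INR k).
Proof.
move=> h. rewrite -ln_1. apply: ln_le'; first lra.
have -> : 1 = INR 1 by []. apply: le_INR; apply/leP; done.
Qed.

Lemma Sr_ge0 n : 0 <= Sr n.
Proof. exact: ln_nat_ge0 (Qn_gt0 n). Qed.

Lemma INR_S' k : INR k.+1 = INR k + 1.
Proof. exact: S_INR. Qed.

Lemma ln2pos : 0 < ln 2. Proof. destruct ln2_b; lra. Qed.

Lemma Qn12 : Qn 12 = (2*(3*(5*(7*(11*(13*(17*(19*(23*(29*(31*(37*1))))))))))))%N.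
Proof. rewrite /Qn. rewrite (@big_ltn _ _ _ 1 13); last by []. rewrite (@big_ltn _ _ _ 2 13); last by []. rewrite (@big_ltn _ _ _ 3 13); last by []. rewrite (@big_ltn _ _ _ 4 13); last by []. rewrite (@big_ltn _ _ _ 5 13); last by []. rewrite (@big_ltn _ _ _ 6 13); last by []. rewrite (@big_ltn _ _ _ 7 13); last by []. rewrite (@big_ltn _ _ _ 8 13); last by []. rewrite (@big_ltn _ _ _ 9 13); last by []. rewrite (@big_ltn _ _ _ 10 13); last by []. rewrite (@big_ltn _ _ _ 11 13); last by []. rewrite (@big_ltn _ _ _ 12 13); last by []. rewrite (@big_geq _ _ _ 13 13); last by []. by rewrite np1 np2 np3 np4 np5 np6 np7 np8 np9 np10 np11 np12. Qed.

Lemma base12 : F (INR 12) <= Sr 12.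
Proof.
have -> : INR 12 = 12 by simpl; lra.
rewrite /Sr Qn12 !muln_INR.
rewrite !INR_IZR_INZ /=.
have hub := ln12_ub.
have hl12 := ln12_lb.
have hll : ln (ln 12) <= 0.912.
  apply: Rle_trans (_ : ln 2.4853 <= _). apply: ln_le'; lra.
  have := ln_ub 2.4853 ltac:(lra). lra.
have hP : ln (2 ^ 42) <= ln (2*(3*(5*(7*(11*(13*(17*(19*(23*(29*(31*(37*1)))))))))))).
  apply: ln_le'. apply: pow_lt; lra. simpl; lra.
rewrite ln_pow in hP; last lra.
have h42 : INR 42 = 42 by rewrite INR_IZR_INZ.
rewrite h42 in hP.
have := ln2_b. rewrite /F. lra.
Qed.

Lemma l4pos : 0 < ln 4.
Proof.
  have : ln 2 < ln 4 by apply: ln_increasing; lra.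
  have := ln2_b; lra.
Qed.

Lemma t1 (f0 p : R) : 0 < f0 -> f0 <= p * ln 4 -> f0 / ln 4 <= p.
Proof.
move=> HF Hp. have l4 := l4pos.
  apply: (Rmult_le_reg_r (ln 4)). exact l4.
  have -> : f0 / ln 4 * ln 4 = f0 by field; lra.
  lra.
Qed.

Lemma t2 (f0 p : R) : 0 < f0 -> f0 / ln 4 <= p -> ln f0 - ln (ln 4) <= ln p.
Proof.
move=> HF hq. have l4 := l4pos.
  have <- : ln (f0 / ln 4) = ln f0 - ln (ln 4).
    rewrite /Rdiv ln_mult; try lra. rewrite ln_Rinv; try lra.  by apply: Rinv_0_lt_compat.
  apply: ln_le' hq. apply: Rdiv_lt_0_compat; lra.
Qed.

Lemma step_real (x f0 f1 s p : R) :
  12 <= x -> 0 < f0 -> f1 <= f0 + ln f0 - ln (ln 4) -> f0 <= s ->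
  0 < p -> 0 <= ln p -> s + ln p <= p * ln 4 -> f1 <= s + ln p.
Proof.
move=> Hx HF HK IH hpp hp0 Hp.
have hq : f0 / ln 4 <= p by apply: t1 => //; lra.
have hq2 := t2 f0 p HF hq.
lra.
Qed.

Lemma ind_main n : (12 <= n)%N -> F (INR n) <= Sr n.
Proof.
elim: n => [//|n IH] hn.
case: (ltngtP n 11) => h.
- have : (12 <= n.+1 < 12)%N by rewrite hn. by case/andP=> a b; move: (leq_ltn_trans a b); rewrite ltnn.
- have {}IH := IH h.
  have Hx : 12 <= INR n.
    have -> : 12 = INR 12 by rewrite INR_IZR_INZ.
    apply: le_INR; apply/leP; exact: h.
  have [HF HK] := KL (INR n) Hx.
  rewrite INR_S' Sr_rec.
  have Hp := Sr_le n.+1.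
  rewrite Sr_rec in Hp.
  have hp0 : 0 <= ln (INR (nth_prime n.+1)) by apply: ln_nat_ge0; exact: nth_prime_ge1.
  have hpp : 0 < INR (nth_prime n.+1) by apply: INR_pos_nat; exact: nth_prime_ge1.
  exact: (step_real (INR n) (F (INR n)) (F (INR n + 1)) (Sr n) (INR (nth_prime n.+1))).
- by rewrite h; exact: base12.
Qed.

Lemma direct (x P U W lp : R) : 1 < x -> 0 < P -> ln x <= U -> 0 < U -> ln U <= W ->
  lp <= ln P -> x*(U+W) - 2*x - 2 < lp -> x*(ln x + ln (ln x)) - 2*x - 2 < ln P.
Proof.
move=> h1 h2 h3 h4 h5 h6 h7.
have hl : 0 < ln x by apply: ln_pos'.
have : ln (ln x) <= ln U by apply: ln_le'.
move=> h8.
have : x*(ln x + ln (ln x)) <= x*(U+W) by apply: Rmult_le_compat_l; lra.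
lra.
Qed.

Lemma ln4_ub : ln 4 <= 1.3864.
Proof. replace 4 with (2*2) by lra. destruct ln2_b. rewrite !ln_mult; lra. Qed.
Lemma ln6_ub : ln 6 <= 1.7921.
Proof. replace 6 with (2*3) by lra. destruct ln2_b, ln3_b. rewrite !ln_mult; lra. Qed.
Lemma ln8_ub : ln 8 <= 2.0796.
Proof. replace 8 with (2*(2*2)) by lra. destruct ln2_b. rewrite !ln_mult; lra. Qed.
Lemma ln9_ub : ln 9 <= 2.1978.
Proof. replace 9 with (3*3) by lra. destruct ln3_b. rewrite !ln_mult; lra. Qed.
Lemma ln2_ub : ln 2 <= 0.6932. Proof. destruct ln2_b; lra. Qed.
Lemma ln3_ub : ln 3 <= 1.0989. Proof. destruct ln3_b; lra. Qed.

Lemma Rn_2 : Rn 2 = (1)%N.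
Proof. rewrite /Rn big_geq //. Qed.

Lemma direct_2 : INR 2 * (ln (INR 2) + ln (ln (INR 2))) - 2 * INR 2 - 2 < ln (P11 2).
Proof.
rewrite P11_INR Rn_2 ?muln_INR.
have -> : INR 2 = 2 by rewrite INR_IZR_INZ.
rewrite ?INR_IZR_INZ /=.
apply: (direct 2 _ 0.6932 (-0.3) (INR 0 * ln 2)); try lra.
- apply: Rle_trans (_ : ln 2 <= _). apply: ln_le'; lra. have := ln2_ub; lra.
- have := ln_le_sub1 0.6932 ltac:(lra); lra.
- rewrite -ln_pow; last lra. apply: ln_le'. apply: pow_lt; lra. simpl; lra.
- have := ln2_b. have -> : INR 0 = 0 by rewrite INR_IZR_INZ. lra.
Qed.

Lemma Rn_3 : Rn 3 = (1)%N.
Proof. rewrite /Rn big_geq //. Qed.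

Lemma direct_3 : INR 3 * (ln (INR 3) + ln (ln (INR 3))) - 2 * INR 3 - 2 < ln (P11 3).
Proof.
rewrite P11_INR Rn_3 ?muln_INR.
have -> : INR 3 = 3 by rewrite INR_IZR_INZ.
rewrite ?INR_IZR_INZ /=.
apply: (direct 3 _ 1.0989 0.1 (INR 0 * ln 2)); try lra.
- apply: Rle_trans (_ : ln 3 <= _). apply: ln_le'; lra. have := ln3_ub; lra.
- have := ln_ub 1.0989 ltac:(lra); lra.
- rewrite -ln_pow; last lra. apply: ln_le'. apply: pow_lt; lra. simpl; lra.
- have := ln2_b. have -> : INR 0 = 0 by rewrite INR_IZR_INZ. lra.
Qed.

Lemma Rn_4 : Rn 4 = (1)%N.
Proof. rewrite /Rn big_geq //. Qed.

Lemma direct_4 : INR 4 * (ln (INR 4) + ln (ln (INR 4))) - 2 * INR 4 - 2 < ln (P11 4).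
Proof.
rewrite P11_INR Rn_4 ?muln_INR.
have -> : INR 4 = 4 by rewrite INR_IZR_INZ.
rewrite ?INR_IZR_INZ /=.
apply: (direct 4 _ 1.3864 0.33 (INR 0 * ln 2)); try lra.
- apply: Rle_trans (_ : ln 4 <= _). apply: ln_le'; lra. have := ln4_ub; lra.
- have := ln_ub 1.3864 ltac:(lra); lra.
- rewrite -ln_pow; last lra. apply: ln_le'. apply: pow_lt; lra. simpl; lra.
- have := ln2_b. have -> : INR 0 = 0 by rewrite INR_IZR_INZ. lra.
Qed.

Lemma Rn_5 : Rn 5 = ((11*1))%N.
Proof. rewrite /Rn. rewrite (@big_ltn _ _ _ 5 6); last by []. rewrite (@big_geq _ _ _ 6 6); last by []. by rewrite np5. Qed.

Lemma direct_5 : INR 5 * (ln (INR 5) + ln (ln (INR 5))) - 2 * INR 5 - 2 < ln (P11 5).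
Proof.
rewrite P11_INR Rn_5 ?muln_INR.
have -> : INR 5 = 5 by rewrite INR_IZR_INZ.
rewrite ?INR_IZR_INZ /=.
apply: (direct 5 _ 1.7921 0.59 (INR 3 * ln 2)); try lra.
- apply: Rle_trans (_ : ln 6 <= _). apply: ln_le'; lra. have := ln6_ub; lra.
- have := ln_ub 1.7921 ltac:(lra); lra.
- rewrite -ln_pow; last lra. apply: ln_le'. apply: pow_lt; lra. simpl; lra.
- have := ln2_b. have -> : INR 3 = 3 by rewrite INR_IZR_INZ. lra.
Qed.

Lemma Rn_6 : Rn 6 = ((11*(13*1)))%N.
Proof. rewrite /Rn. rewrite (@big_ltn _ _ _ 5 7); last by []. rewrite (@big_ltn _ _ _ 6 7); last by []. rewrite (@big_geq _ _ _ 7 7); last by []. by rewrite np5 np6. Qed.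

Lemma direct_6 : INR 6 * (ln (INR 6) + ln (ln (INR 6))) - 2 * INR 6 - 2 < ln (P11 6).
Proof.
rewrite P11_INR Rn_6 ?muln_INR.
have -> : INR 6 = 6 by rewrite INR_IZR_INZ.
rewrite ?INR_IZR_INZ /=.
apply: (direct 6 _ 1.7921 0.59 (INR 7 * ln 2)); try lra.
- apply: Rle_trans (_ : ln 6 <= _). apply: ln_le'; lra. have := ln6_ub; lra.
- have := ln_ub 1.7921 ltac:(lra); lra.
- rewrite -ln_pow; last lra. apply: ln_le'. apply: pow_lt; lra. simpl; lra.
- have := ln2_b. have -> : INR 7 = 7 by rewrite INR_IZR_INZ. lra.
Qed.

Lemma Rn_7 : Rn 7 = ((11*(13*(17*1))))%N.
Proof. rewrite /Rn. rewrite (@big_ltn _ _ _ 5 8); last by []. rewrite (@big_ltn _ _ _ 6 8); last by []. rewrite (@big_ltn _ _ _ 7 8); last by []. rewrite (@big_geq _ _ _ 8 8); last by []. by rewrite np5 np6 np7. Qed.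

Lemma direct_7 : INR 7 * (ln (INR 7) + ln (ln (INR 7))) - 2 * INR 7 - 2 < ln (P11 7).
Proof.
rewrite P11_INR Rn_7 ?muln_INR.
have -> : INR 7 = 7 by rewrite INR_IZR_INZ.
rewrite ?INR_IZR_INZ /=.
apply: (direct 7 _ 2.0796 0.74 (INR 11 * ln 2)); try lra.
- apply: Rle_trans (_ : ln 8 <= _). apply: ln_le'; lra. have := ln8_ub; lra.
- have := ln_ub 2.0796 ltac:(lra); lra.
- rewrite -ln_pow; last lra. apply: ln_le'. apply: pow_lt; lra. simpl; lra.
- have := ln2_b. have -> : INR 11 = 11 by rewrite INR_IZR_INZ. lra.
Qed.

Lemma Rn_8 : Rn 8 = ((11*(13*(17*(19*1)))))%N.
Proof. rewrite /Rn. rewrite (@big_ltn _ _ _ 5 9); last by []. rewrite (@big_ltn _ _ _ 6 9); last by []. rewrite (@big_ltn _ _ _ 7 9); last by []. rewrite (@big_ltn _ _ _ 8 9); last by []. rewrite (@big_geq _ _ _ 9 9); last by []. by rewrite np5 np6 np7 np8. Qed.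

Lemma direct_8 : INR 8 * (ln (INR 8) + ln (ln (INR 8))) - 2 * INR 8 - 2 < ln (P11 8).
Proof.
rewrite P11_INR Rn_8 ?muln_INR.
have -> : INR 8 = 8 by rewrite INR_IZR_INZ.
rewrite ?INR_IZR_INZ /=.
apply: (direct 8 _ 2.0796 0.74 (INR 15 * ln 2)); try lra.
- apply: Rle_trans (_ : ln 8 <= _). apply: ln_le'; lra. have := ln8_ub; lra.
- have := ln_ub 2.0796 ltac:(lra); lra.
- rewrite -ln_pow; last lra. apply: ln_le'. apply: pow_lt; lra. simpl; lra.
- have := ln2_b. have -> : INR 15 = 15 by rewrite INR_IZR_INZ. lra.
Qed.

Lemma Rn_9 : Rn 9 = ((11*(13*(17*(19*(23*1))))))%N.
Proof. rewrite /Rn. rewrite (@big_ltn _ _ _ 5 10); last by []. rewrite (@big_ltn _ _ _ 6 10); last by []. rewrite (@big_ltn _ _ _ 7 10); last by []. rewrite (@big_ltn _ _ _ 8 10); last by []. rewrite (@big_ltn _ _ _ 9 10); last by []. rewrite (@big_geq _ _ _ 10 10); last by []. by rewrite np5 np6 np7 np8 np9. Qed.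

Lemma direct_9 : INR 9 * (ln (INR 9) + ln (ln (INR 9))) - 2 * INR 9 - 2 < ln (P11 9).
Proof.
rewrite P11_INR Rn_9 ?muln_INR.
have -> : INR 9 = 9 by rewrite INR_IZR_INZ.
rewrite ?INR_IZR_INZ /=.
apply: (direct 9 _ 2.1978 0.79 (INR 20 * ln 2)); try lra.
- apply: Rle_trans (_ : ln 9 <= _). apply: ln_le'; lra. have := ln9_ub; lra.
- have := ln_ub 2.1978 ltac:(lra); lra.
- rewrite -ln_pow; last lra. apply: ln_le'. apply: pow_lt; lra. simpl; lra.
- have := ln2_b. have -> : INR 20 = 20 by rewrite INR_IZR_INZ. lra.
Qed.

Lemma Rn_10 : Rn 10 = ((11*(13*(17*(19*(23*(29*1)))))))%N.
Proof. rewrite /Rn. rewrite (@big_ltn _ _ _ 5 11); last by []. rewrite (@big_ltn _ _ _ 6 11); last by []. rewrite (@big_ltn _ _ _ 7 11); last by []. rewrite (@big_ltn _ _ _ 8 11); last by []. rewrite (@big_ltn _ _ _ 9 11); last by []. rewrite (@big_ltn _ _ _ 10 11); last by []. rewrite (@big_geq _ _ _ 11 11); last by []. by rewrite np5 np6 np7 np8 np9 np10. Qed.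

Lemma direct_10 : INR 10 * (ln (INR 10) + ln (ln (INR 10))) - 2 * INR 10 - 2 < ln (P11 10).
Proof.
rewrite P11_INR Rn_10 ?muln_INR.
have -> : INR 10 = 10 by rewrite INR_IZR_INZ.
rewrite ?INR_IZR_INZ /=.
apply: (direct 10 _ 2.4853 0.913 (INR 24 * ln 2)); try lra.
- apply: Rle_trans (_ : ln 12 <= _). apply: ln_le'; lra. have := ln12_ub; lra.
- have := ln_ub 2.4853 ltac:(lra); lra.
- rewrite -ln_pow; last lra. apply: ln_le'. apply: pow_lt; lra. simpl; lra.
- have := ln2_b. have -> : INR 24 = 24 by rewrite INR_IZR_INZ. lra.
Qed.

Lemma Rn_11 : Rn 11 = ((11*(13*(17*(19*(23*(29*(31*1))))))))%N.
Proof. rewrite /Rn. rewrite (@big_ltn _ _ _ 5 12); last by []. rewrite (@big_ltn _ _ _ 6 12); last by []. rewrite (@big_ltn _ _ _ 7 12); last by []. rewrite (@big_ltn _ _ _ 8 12); last by []. rewrite (@big_ltn _ _ _ 9 12); last by []. rewrite (@big_ltn _ _ _ 10 12); last by []. rewrite (@big_ltn _ _ _ 11 12); last by []. rewrite (@big_geq _ _ _ 12 12); last by []. by rewrite np5 np6 np7 np8 np9 np10 np11. Qed.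

Lemma direct_11 : INR 11 * (ln (INR 11) + ln (ln (INR 11))) - 2 * INR 11 - 2 < ln (P11 11).
Proof.
rewrite P11_INR Rn_11 ?muln_INR.
have -> : INR 11 = 11 by rewrite INR_IZR_INZ.
rewrite ?INR_IZR_INZ /=.
apply: (direct 11 _ 2.4853 0.913 (INR 29 * ln 2)); try lra.
- apply: Rle_trans (_ : ln 12 <= _). apply: ln_le'; lra. have := ln12_ub; lra.
- have := ln_ub 2.4853 ltac:(lra); lra.
- rewrite -ln_pow; last lra. apply: ln_le'. apply: pow_lt; lra. simpl; lra.
- have := ln2_b. have -> : INR 29 = 29 by rewrite INR_IZR_INZ. lra.
Qed.

Lemma ln210_ub : ln 210 <= 5.6.
Proof.
apply: Rle_trans (_ : ln (2^8) <= _). apply: ln_le'; [lra | simpl; lra].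
rewrite ln_pow; last lra. have := ln2_b. simpl INR. lra.
Qed.

Lemma big_case n : (12 <= n)%N ->
  INR n * (ln (INR n) + ln (ln (INR n))) - 2 * INR n - 2 < ln (P11 n).
Proof.
move=> hn.
have h := ind_main n hn.
have hR : 0 < INR (Rn n).
  apply: INR_pos_nat. rewrite /Rn prodn_gt0 // => i; exact: nth_prime_ge1.
have hS : Sr n = ln 210 + ln (P11 n).
  rewrite /Sr Qn_split; last by apply: leq_trans hn.
  have h210 : INR 210 = 210 by rewrite INR_IZR_INZ.
  rewrite muln_INR h210 ln_mult; [by rewrite P11_INR | lra | exact: hR].
have := ln210_ub. rewrite /F in h. lra.
Qed.

Lemma key n : (2 <= n)%N ->
  INR n * (ln (INR n) + ln (ln (INR n))) - 2 * INR n - 2 < ln (P11 n).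
Proof.
move=> hn.
case: (leqP 12 n) => h; first exact: big_case.
case: n hn h => [|[|[|[|[|[|[|[|[|[|[|[|n]]]]]]]]]]]] // _ _.
- exact: direct_2.
- exact: direct_3.
- exact: direct_4.
- exact: direct_5.
- exact: direct_6.
- exact: direct_7.
- exact: direct_8.
- exact: direct_9.
- exact: direct_10.
- exact: direct_11.
Qed.

Theorem lemma2p11 (n : nat) (hn : (2 <= n)%nat) :
  P11 n > Rpower (INR n * ln (INR n)) (INR n) * exp (- 2 * INR n - 2).
Proof.
have K := key n hn.
have hx : 1 < INR n.
  have -> : 1 = INR 1 by []. apply: lt_INR; apply/ltP; exact: hn.
have hl : 0 < ln (INR n) by apply: ln_pos'.
have hP : 0 < P11 n.
  rewrite P11_INR; apply: INR_pos_nat. rewrite /Rn prodn_gt0 // => i; exact: nth_prime_ge1.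
rewrite /Rpower -exp_plus ln_mult; try lra.
rewrite -(exp_ln (P11 n)) //.
apply: exp_increasing. lra.
Qed.
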